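(* In the Ewens setting, let $\Delta W(N,k)=W(N,k+1)-W(N,k)$ for $0\le k\le N-2$. Then for every $k\ge0$: $$\Delta W(k+2,k)=\theta\,(\theta-(k+1))\,[k]_\theta,$$ and for all $N\ge k+3$, $$\Delta W(N,k)=(N-1)\,\Delta W(N-1,k)+\theta^2\,\frac{(N-2)!}{k!}\,[k]_\theta.$$
   Context: Permutations of $\{1,\dots,N\}$ are written in one-line notation; $\mathfrak S_N$ is the set of all of them. An entry $\pi_j$ is a left-to-right maximum if $\pi_j>\pi_i$ for all $i<j$; $\mathrm{lrm}(\pi)$ is the number of left-to-right maxima. Let $\theta>0$. For $0\le k\le N-1$, a permutation $\pi\in\mathfrak S_N$ is $k$-winnable if the first index $j>k$ such that $\pi_j$ is a left-to-right maximum satisfies $\pi_j=N$. Ewens setting: $W(N,k)=\sum_{k\text{-winnable }\pi\in\mathfrak S_N}\theta^{\mathrm{lrm}(\pi)}$, with $W(N,N):=0$, and $[m]_\theta=\theta(\theta+1)\cdots(\theta+m-1)$ with $[0]_\theta=1$. *)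

(* Defs.v *)
From HB Require Import structures.
From mathcomp Require Import all_boot all_order all_algebra all_fingroup.
Set Implicit Arguments. Unset Strict Implicit. Unset Printing Implicit Defensive.
Import Order.TTheory GRing.Theory Num.Theory.
Local Open Scope ring_scope.

(* Permutations of {1..N} are encoded as s : 'S_N (permutations of 'I_N = {0..N-1});
   position j (0-based) holds the value s j (0-based).  So the paper's pi_{j+1} = s j + 1. *)

Definition is_lrmax (N : nat) (s : 'S_N) (j : 'I_N) : bool :=
  [forall i : 'I_N, (i < j)%N ==> (s i < s j)%N].

Definition lrm (N : nat) (s : 'S_N) : nat := #|[set j : 'I_N | is_lrmax s j]|.

(* k-winnable: the first (1-based) index j > k (i.e. 0-based j >= k) which is a
   left-to-right maximum carries the maximal value N (0-based value N-1). *)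
Definition winnable (N k : nat) (s : 'S_N) : bool :=
  [exists j : 'I_N,
     [&& (k <= j)%N, is_lrmax s j,
         [forall i : 'I_N, ((k <= i)%N && (i < j)%N) ==> ~~ is_lrmax s i]
       & (nat_of_ord (s j) == N.-1)]].

Definition W (R : numDomainType) (theta : R) (N k : nat) : R :=
  if (k < N)%N then \sum_(s : 'S_N | winnable k s) theta ^+ lrm s else 0.

Definition DW (R : numDomainType) (theta : R) (N k : nat) : R :=
  W theta N k.+1 - W theta N k.

Definition rising (R : numDomainType) (theta : R) (m : nat) : R :=
  \prod_(i < m) (theta + i%:R).

(* Main.v *)
Require Import Defs.
From HB Require Import structures.
From mathcomp Require Import all_boot all_order all_algebra all_fingroup.
Set Implicit Arguments. Unset Strict Implicit. Unset Printing Implicit Defensive.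
Import Order.TTheory GRing.Theory Num.Theory.
Local Open Scope ring_scope.
From mathcomp Require Import zify ring lra.

Section Aux.
Variable R : numDomainType.

Lemma sum_decomp n (F : 'S_n.+1 -> R) :
  \sum_(s : 'S_n.+1) F s = \sum_(v : 'I_n.+1) \sum_(t : 'S_n) F (lift_perm ord_max v t).
Proof.
rewrite (partition_big (fun s : 'S_n.+1 => s ord_max) predT) //=.
apply: eq_bigr => j0 _.
set i0 := (ord_max : 'I_n.+1).
rewrite (reindex (lift_perm i0 j0)); last first.
  pose ulsf i (s : 'S_n.+1) k := odflt k (unlift (s i) (s (lift i k))).
  have ulsfK i (s : 'S_n.+1) k: lift (s i) (ulsf i s k) = s (lift i k).
    rewrite /ulsf; have:= neq_lift i k.
    by rewrite -(can_eq (permK s)) => /unlift_some[] ? ? ->.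
  have inj_ulsf: injective (ulsf i0 _).
    move=> s; apply: can_inj (ulsf (s i0) s^-1%g) _ => k'.
    by rewrite {1}/ulsf ulsfK !permK liftK.
  exists (fun s => perm (inj_ulsf s)) => [s _ | s].
    by apply/permP=> k'; rewrite permE /ulsf lift_perm_lift lift_perm_id liftK.
  move/(s _ =P _) => si0; apply/permP=> k.
  case: (unliftP i0 k) => [k'|] ->; rewrite ?lift_perm_id //.
  by rewrite lift_perm_lift -si0 permE ulsfK.
by apply: eq_bigl => s; rewrite lift_perm_id eqxx.
Qed.
End Aux.

Lemma bump_lt n x : (x < n)%N -> bump n x = x.
Proof. by move=> h; rewrite /bump leqNgt h. Qed.

Lemma ltn_bump2 h i j : (bump h i < bump h j)%N = (i < j)%N.
Proof. by rewrite !ltnNge leq_bump2. Qed.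

Lemma lrmax_lift n (v : 'I_n.+1) (t : 'S_n) (p : 'I_n) :
  is_lrmax (lift_perm ord_max v t) (lift ord_max p) = is_lrmax t p.
Proof.
apply/forallP/forallP => H i.
  have := H (lift ord_max i); rewrite !lift_perm_lift !lift_max /= ltn_bump2 //.
case: (unliftP ord_max i) => [i'|] ->.
  rewrite !lift_perm_lift !lift_max /= ltn_bump2; exact: H.
rewrite lift_max; move: (ltn_ord p) => /= hp; rewrite ltnNge ltnW //.
Qed.

Lemma lrmax_max n (v : 'I_n.+1) (t : 'S_n) :
  is_lrmax (lift_perm ord_max v t) ord_max = (v == ord_max).
Proof.
case: eqP => [->|hv].
  apply/forallP => i; case: (unliftP ord_max i) => [i'|] ->; last by rewrite ltnn.
  rewrite lift_perm_lift lift_perm_id /= (@bump_lt n i') ?(@bump_lt n (t i')) ?ltn_ord //.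
have vn : (v < n)%N.
  have := ltn_ord v; rewrite ltnS leq_eqVlt => /orP [/eqP e|] //.
  by case: hv; apply: val_inj.
apply/negP => /forallP /(_ (lift ord_max (t^-1 (Ordinal vn)))%g).
rewrite lift_perm_lift lift_perm_id permKV /= bump_lt // /bump leqnn.
by rewrite ltn_ord /= ltnNge leq_addl.
Qed.

Lemma lrm_lift n (v : 'I_n.+1) (t : 'S_n) :
  lrm (lift_perm ord_max v t) = (lrm t + (v == ord_max))%N.
Proof.
rewrite /lrm -!sum1_card big_mkcond big_ord_recr /= [in RHS]big_mkcond; congr (_ + _)%N; last first.
  by rewrite in_set lrmax_max; case: (v == ord_max).
apply: eq_bigr => i _; rewrite !in_set.
have -> : widen_ord (leqnSn n) i = lift ord_max i by apply: val_inj; rewrite /= (@bump_lt n i) ?ltn_ord.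
by rewrite lrmax_lift.
Qed.
Definition P n k (s : 'S_n) := [forall p : 'I_n, (k <= p)%N ==> ~~ is_lrmax s p].

Lemma lift_max' n (p : 'I_n) : (lift ord_max p : nat) = p.
Proof. by rewrite /= (@bump_lt n p) ?ltn_ord. Qed.

Lemma P_lift n k (v : 'I_n.+1) (t : 'S_n) : (k <= n)%N ->
  P k (lift_perm ord_max v t) = (v != ord_max) && P k t.
Proof.
move=> kn; apply/forallP/andP => [H | [hv hP] i].
  split; first by have := H ord_max; rewrite lrmax_max /= kn.
  by apply/forallP => p; have := H (lift ord_max p); rewrite lrmax_lift lift_max'.
case: (unliftP ord_max i) => [p|] ->.
  by rewrite lrmax_lift lift_max'; exact: (forallP hP p).
by rewrite lrmax_max hv implybT.
Qed.

Lemma bump_eqn v x n : (v < n)%N -> (x < n)%N -> (bump v x == n) = (x == n.-1).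
Proof. rewrite /bump; case: leqP => h hv hx; apply/eqP/eqP; lia. Qed.

Lemma win_lift n k (v : 'I_n.+1) (t : 'S_n) : (k <= n)%N ->
  winnable k (lift_perm ord_max v t) = if v == ord_max then P k t else winnable k t.
Proof.
move=> kn; case: eqP => [-> | hv].
  apply/existsP/forallP => [[j /and4P [hkj hl hf hsj]] p | H].
    case: (unliftP ord_max j) hkj hl hf hsj => [j'|] -> hkj hl hf hsj.
      by move: hsj; rewrite lift_perm_lift /= (@bump_lt n (t j')) ?ltn_ord // => /eqP h; have := ltn_ord (t j'); rewrite h ltnn.
    apply/implyP => hp; have := forallP hf (lift ord_max p).
    by rewrite lift_max' hp /= ltn_ord lrmax_lift.
  exists ord_max; rewrite /= kn lrmax_max eqxx lift_perm_id /= eqxx andbT.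
  apply/forallP => i; case: (unliftP ord_max i) => [p|] ->.
    rewrite lift_max' lrmax_lift; apply/implyP => /andP [h _]; exact: (implyP (H p) h).
  by rewrite ltnn andbF.
have vn : (v < n)%N.
  have := ltn_ord v; rewrite ltnS leq_eqVlt => /orP [/eqP e|] //.
  by case: hv; apply: val_inj.
apply/existsP/existsP => [[j /and4P [hkj hl hf hsj]] | [j /and4P [hkj hl hf hsj]]].
  case: (unliftP ord_max j) hkj hl hf hsj => [j'|] -> hkj hl hf hsj; last first.
    by move: hsj; rewrite lift_perm_id /= => /eqP h; move: vn; rewrite h ltnn.
  exists j'; move: hkj hl hsj; rewrite lift_max' lrmax_lift lift_perm_lift /=.
  rewrite bump_eqn ?ltn_ord // => -> -> -> /=; rewrite andbT.
  apply/forallP => i; have := forallP hf (lift ord_max i).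
  by rewrite !lift_max' lrmax_lift.
exists (lift ord_max j); rewrite lift_max' lrmax_lift hkj hl lift_perm_lift /=.
rewrite bump_eqn ?ltn_ord // hsj andbT /=.
apply/forallP => i; case: (unliftP ord_max i) => [p|] ->.
  by rewrite !lift_max' lrmax_lift; exact: (forallP hf p).
by have hj := ltn_ord j; rewrite /= ltnNge (ltnW hj) andbF.
Qed.

Lemma win_ge n k (t : 'S_n) : (n <= k)%N -> winnable k t = false.
Proof.
move=> nk; apply/existsP => [[j /and4P [h _ _ _]]].
have := ltn_ord j; lia.
Qed.

Lemma widen_neq n (i : 'I_n) : (widen_ord (leqnSn n) i == ord_max) = false.
Proof. by rewrite -val_eqE /= ltn_eqF. Qed.
Section Sums.
Variables (R : numDomainType) (theta : R).

Lemma sumc n (x : R) : \sum_(i < n) x = n%:R * x.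
Proof. by rewrite sumr_const card_ord mulr_natl. Qed.

Definition A n k := \sum_(s : 'S_n | P k s) theta ^+ lrm s.

Lemma W_sum n k : W theta n k = \sum_(s : 'S_n | winnable k s) theta ^+ lrm s.
Proof.
rewrite /W; case: ltnP => // h; rewrite big_pred0 // => s; exact: win_ge.
Qed.

Lemma W_rec n k : (k <= n)%N -> W theta n.+1 k = n%:R * W theta n k + theta * A n k.
Proof.
move=> kn; rewrite !W_sum big_mkcond sum_decomp big_ord_recr /=; congr (_ + _).
  rewrite -sumc; apply: eq_bigr => i _.
  rewrite [RHS]big_mkcond; apply: eq_bigr => t _.
  by rewrite win_lift // widen_neq lrm_lift widen_neq addn0.
rewrite /A big_distrr [RHS]big_mkcond; apply: eq_bigr => t _.
rewrite win_lift // eqxx lrm_lift eqxx; case: (P k t); rewrite ?mulr0 //.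
by rewrite addn1 exprS.
Qed.

Lemma A_rec n k : (k <= n)%N -> A n.+1 k = n%:R * A n k.
Proof.
move=> kn; rewrite /A big_mkcond sum_decomp big_ord_recr /=.
rewrite [X in _ + X = _]big1 ?addr0; last by move=> t _; rewrite P_lift // eqxx.
rewrite -sumc; apply: eq_bigr => i _.
rewrite [RHS]big_mkcond; apply: eq_bigr => t _.
by rewrite P_lift // widen_neq lrm_lift widen_neq addn0.
Qed.

Lemma A_base n : A n n = rising theta n.
Proof.
have -> : A n n = \sum_(s : 'S_n) theta ^+ lrm s.
  apply: eq_bigl => s; apply/forallP => p; have := ltn_ord p.
  by rewrite ltnNge => /negbTE ->.
elim: n => [|n IH].
  rewrite /rising big_ord0 (eq_bigr (fun _ => 1)); last first.
    move=> s _; suff -> : lrm s = 0%N by [].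
    by apply/eqP; rewrite -leqn0; apply: leq_trans (max_card _) _; rewrite card_ord.
  by rewrite sumr_const card_Sn.
rewrite sum_decomp big_ord_recr /= /rising big_ord_recr /= -/(rising theta n) -IH.
rewrite (eq_bigr (fun _ => \sum_(t : 'S_n) theta ^+ lrm t)); last first.
  by move=> i _; apply: eq_bigr => t _; rewrite lrm_lift widen_neq addn0.
rewrite sumc [X in _ + X = _](eq_bigr (fun t : 'S_n => theta * theta ^+ lrm t)); last first.
  by move=> t _; rewrite lrm_lift eqxx addn1 exprS.
rewrite -big_distrr /=; ring.
Qed.

Lemma A_closed n k : (k <= n)%N -> A n k = rising theta k * \prod_(k <= i < n) i%:R.
Proof.
elim: n => [|n IH] kn.
  by move: kn; rewrite leqn0 => /eqP ->; rewrite A_base big_geq ?mulr1.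
move: kn; rewrite leq_eqVlt => /orP [/eqP -> | kn].
  by rewrite A_base big_geq // mulr1.
rewrite A_rec //. rewrite IH //. have kn2 : (k <= n)%N by [].
by rewrite (big_nat_recr _ _ _ kn2) /=; ring.


Qed.
End Sums.
Lemma fact_split k m : (k <= m)%N -> m`! = (k`! * \prod_(k.+1 <= i < m.+1) i)%N.
Proof.
elim: m => [|m IH] km.
  by move: km; rewrite leqn0 => /eqP ->; rewrite big_geq // muln1.
move: km; rewrite leq_eqVlt => /orP [/eqP -> | km].
  by rewrite big_geq // muln1.
have km2 : (k.+1 <= m.+1)%N by [].
by rewrite factS (IH km) (big_nat_recr _ _ _ km2) /= mulnCA [(_ * m.+1)%N]mulnC.
Qed.

Lemma rising_S (R : numDomainType) (theta : R) k :
  rising theta k.+1 = rising theta k * (theta + k%:R).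
Proof. by rewrite /rising big_ord_recr. Qed.

Theorem corollary4p4 (R : realFieldType) (theta : R) (htheta : 0 < theta) (k : nat) :
  DW theta k.+2 k = theta * (theta - k.+1%:R) * rising theta k /\
  (forall N : nat, (k + 3 <= N)%N ->
     DW theta N k =
       (N.-1)%:R * DW theta N.-1 k
       + theta ^+ 2 * ((N - 2)`!%:R / k`!%:R) * rising theta k).
Proof.
split.
  rewrite /DW (W_rec theta (leqnn k.+1)) (W_rec theta (leqnSn k)).
  rewrite (W_rec theta (leqnn k)) {2}/W ltnn {1}/W ltnn !A_base.
  rewrite A_closed // big_nat1 rising_S !mulr0 !add0r.
  rewrite -addn1 natrD; ring.
move=> [|n] hN; first by move: hN; rewrite addn3.
have kn : (k < n)%N by lia.
have k1n : (k.+1 <= n)%N by lia.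
rewrite /DW /= (W_rec theta k1n) (W_rec theta (ltnW kn)).
rewrite !A_closed ?(ltnW kn) // (big_ltn kn) rising_S.
set p := \prod_(k.+1 <= i < n) i%:R.
have hf : (n.+1 - 2)`!%:R = k`!%:R * p :> R.
  rewrite subSS subn1 (@fact_split k n.-1); last by lia.
  rewrite natrM natr_prod /p; congr (_ * _).
  by rewrite prednK //; lia.
have kf : k`!%:R != 0 :> R by rewrite pnatr_eq0 -lt0n fact_gt0.
rewrite hf [k`!%:R * p]mulrC mulfK //; ring.
Qed.
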